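(* Let $R$ be any unital ring, let $\mathcal{F}$ be any Gabriel filter of right ideals of $R$, and let $\Delta=\{\delta_n\}_{n\in\omega}$ be any higher derivation on $R$. Then for every $I\in\mathcal{F}$ and every $n\in\omega$ there is $J\in\mathcal{F}$ with $\delta_i(J)\subseteq I$ for all $i\le n$. (That is, every Gabriel filter is higher differential; equivalently every hereditary torsion theory is higher differential.)
   Context: For a right ideal $I$ and $r\in R$, write $(r:I)=\{s\in R\mid rs\in I\}$. A Gabriel filter on $R$ is a nonempty collection $\mathcal{F}$ of right ideals of $R$ such that (1) if $I\in\mathcal{F}$ and $r\in R$ then $(r:I)\in\mathcal{F}$; (2) if $I\in\mathcal{F}$ and $J$ is a right ideal with $(r:J)\in\mathcal{F}$ for all $r\in I$, then $J\in\mathcal{F}$. Gabriel filters correspond bijectively to hereditary torsion theories on right $R$-modules. A higher derivation on $R$ is a family $\{\delta_n\}_{n\in\omega}$ of additive maps $R\to R$ with $\delta_0=\mathrm{id}_R$ and $\delta_n(rs)=\sum_{i=0}^n\delta_i(r)\delta_{n-i}(s)$ for all $n$ and all $r,s\in R$. *)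

(* Defs.v *)
From HB Require Import structures.
From mathcomp Require Import all_boot all_algebra.
Set Implicit Arguments. Unset Strict Implicit. Unset Printing Implicit Defensive.
Import GRing.Theory.
Local Open Scope ring_scope.

Definition is_right_ideal (R : pzRingType) (I : R -> Prop) : Prop :=
  [/\ I 0,
      (forall x y, I x -> I y -> I (x - y)) &
      (forall x r, I x -> I (x * r))].

Definition colon (R : pzRingType) (r : R) (I : R -> Prop) : R -> Prop :=
  fun s => I (r * s).

Definition gabriel_filter (R : pzRingType) (F : (R -> Prop) -> Prop) : Prop :=
  [/\ (exists I, F I),
      (forall I, F I -> is_right_ideal I),
      (forall I r, F I -> F (colon r I)) &
      (forall I J, F I -> is_right_ideal J ->
         (forall r, I r -> F (colon r J)) -> F J)].

Definition higher_derivation (R : pzRingType) (delta : nat -> R -> R) : Prop :=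
  [/\ (forall n x y, delta n (x + y) = delta n x + delta n y),
      (forall x, delta 0%N x = x) &
      (forall n r s, delta n (r * s) =
         \sum_(i < n.+1) delta i r * delta (n - i)%N s)].

(* Main.v *)
Require Import Defs.
From mathcomp Require Import all_boot all_algebra.
From Stdlib Require Import FunctionalExtensionality PropExtensionality.
Import GRing.Theory.
Local Open Scope ring_scope.

Section S.
Set Implicit Arguments.
Variable (R : pzRingType) (F : (R -> Prop) -> Prop) (delta : nat -> R -> R).
Hypothesis HF : gabriel_filter F.
Hypothesis HD : higher_derivation delta.

Lemma ideal_add (I : R -> Prop) x y : is_right_ideal I -> I x -> I y -> I (x + y).
Proof.
move=> HI Ix Iy; have [I0 IB _] := HI.
have : I (x - (0 - y)) by apply: (IB) => //; apply: (IB).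
by rewrite sub0r opprK.
Qed.

Lemma ideal_sum (I : R -> Prop) m (f : 'I_m -> R) :
  is_right_ideal I -> (forall j, I (f j)) -> I (\sum_(j < m) f j).
Proof.
move=> HI Hf; apply: (big_ind I) => //; first by case: HI.
by move=> a b; apply: ideal_add.
Qed.

Lemma colon_ideal (J : R -> Prop) r : is_right_ideal J -> is_right_ideal (colon r J).
Proof.
move=> HJ; have [J0 JB JM] := HJ; split; rewrite /colon.
- by rewrite mulr0.
- by move=> x y Hx Hy; rewrite mulrBr; apply: JB.
- by move=> x s Hx; rewrite mulrA; apply: JM.
Qed.

Lemma F_top : F (fun _ => True).
Proof.
have [[I0 HI0] Hid _ _] := HF.
have := (match HF with And4 _ _ H _ => H end) I0 0 HI0.
have [I00 _ _] := Hid _ HI0.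
have -> : colon 0 I0 = (fun _ => True); last by [].
apply: functional_extensionality => s; apply: propositional_extensionality.
by rewrite /colon mul0r; split.
Qed.

Lemma F_up (A B : R -> Prop) : F A -> is_right_ideal B -> (forall x, A x -> B x) -> F B.
Proof.
move=> FA HB AB; have [_ Hid _ H2] := HF.
apply: (H2 A) => // r Ar.
have [_ _ AM] := Hid _ FA.
have -> : colon r B = (fun _ => True) by
  apply: functional_extensionality => s; apply: propositional_extensionality;
  split => // _; apply: AB; apply: AM.
exact: F_top.
Qed.

Lemma ideal_and (A B : R -> Prop) : is_right_ideal A -> is_right_ideal B ->
  is_right_ideal (fun x => A x /\ B x).
Proof.
move=> HA HB; have [A0 AB AM] := HA; have [B0 BB BM] := HB; split => //.
- by move=> x y [] ? ? [] ? ?; split; [apply: AB|apply: BB].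
- by move=> x r [] ? ?; split; [apply: AM|apply: BM].
Qed.

Lemma F_and (A B : R -> Prop) : F A -> F B -> F (fun x => A x /\ B x).
Proof.
move=> FA FB; have [_ Hid H1 H2] := HF.
apply: (H2 A) => //; first by apply: ideal_and; apply: Hid.
move=> r Ar; apply: (F_up (H1 _ r FB)).
  by apply: colon_ideal; apply: ideal_and; apply: Hid.
have [_ _ AM] := Hid _ FA.
by move=> s Bs; split => //; apply: AM.
Qed.

Lemma d0 n : delta n 0 = 0.
Proof.
have [Hadd _ _] := HD.
by apply/(addrI (delta n 0)); rewrite -Hadd !addr0.
Qed.

Lemma dB n x y : delta n (x - y) = delta n x - delta n y.
Proof.
have [Hadd _ _] := HD.
have dN : delta n (- y) = - delta n y.
  by apply/(addrI (delta n y)); rewrite -Hadd !subrr d0.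
by rewrite Hadd dN.
Qed.

Definition M (I : R -> Prop) n : R -> Prop := fun x => forall i, (i <= n)%N -> I (delta i x).

Lemma M_ideal I n : is_right_ideal I -> is_right_ideal (M I n).
Proof.
move=> HI; have [I0 IB IM] := HI; split; rewrite /M.
- by move=> i _; rewrite d0.
- by move=> x y Hx Hy i hi; rewrite dB; apply: IB; [apply: Hx|apply: Hy].
- move=> x r Hx i hi; have [_ _ Hm] := HD; rewrite Hm.
  apply: ideal_sum => // j; apply: IM; apply: Hx.
  by apply: leq_trans hi; rewrite -ltnS.
Qed.

Definition C (I : R -> Prop) (r : R) m : R -> Prop :=
  fun s => forall j, (j <= m)%N -> I (delta j r * s).

Lemma C_F I r m : F I -> F (C I r m).
Proof.
move=> FI; have [_ Hid H1 _] := HF.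
elim: m => [|m IH].
  have -> : C I r 0 = colon r I; last by apply: H1.
  apply: functional_extensionality => s; apply: propositional_extensionality.
  rewrite /C /colon; split; first by move/(_ 0%N isT); have [_ -> _] := HD.
  by move=> H j; rewrite leqn0 => /eqP ->; have [_ -> _] := HD.
have -> : C I r m.+1 = (fun s => C I r m s /\ colon (delta m.+1 r) I s).
  apply: functional_extensionality => s; apply: propositional_extensionality.
  rewrite /C /colon; split.
    by move=> H; split; [move=> j hj; apply: H; apply: leqW|apply: H].
  move=> [H1' H2'] j; rewrite leq_eqVlt => /orP [/eqP -> //|]; rewrite ltnS.
  exact: H1'.
by apply: F_and => //; apply: H1.
Qed.

Lemma M_F n : forall I, F I -> F (M I n).
Proof.
have [_ Hid H1 H2] := HF.
elim: n => [|n IH] I FI.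
  have -> : M I 0 = I; last by [].
  apply: functional_extensionality => s; apply: propositional_extensionality.
  rewrite /M; split; first by move/(_ 0%N isT); have [_ -> _] := HD.
  by move=> H j; rewrite leqn0 => /eqP ->; have [_ -> _] := HD.
have HI := Hid _ FI; have [I0 IB IM] := HI.
apply: (H2 I) => //; first exact: M_ideal.
move=> r Ir.
apply: (F_up (IH _ (C_F r n.+1 FI))); first by apply: colon_ideal; apply: M_ideal.
move=> s Hs i hi; rewrite /colon; have [_ Hd0 Hm] := HD; rewrite Hm.
apply: ideal_sum => // -[j hj] /=.
case: j hj => [|j] hj.
  by rewrite Hd0; apply: IM.
have := Hs (i - j.+1)%N.
have hij : (i - j.+1 <= n)%N.
  by rewrite leq_subLR; apply: leq_trans hi _; rewrite addSn ltnS leq_addl.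
move/(_ hij j.+1).
apply; apply: leq_trans hi; by rewrite -ltnS.
Qed.

End S.

Theorem corollary3p2 (R : pzRingType) (F : (R -> Prop) -> Prop)
  (delta : nat -> R -> R) :
  gabriel_filter F -> higher_derivation delta ->
  forall I, F I -> forall n : nat,
    exists J, F J /\ (forall i : nat, (i <= n)%N -> forall x, J x -> I (delta i x)).
Proof.
move=> HF HD I FI n; exists (@M R delta I n); split; first exact: M_F.
by move=> i hi x Hx; apply: Hx.
Qed.
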